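(* Let $G(\mathcal V,\mathcal E)$ be a finite simple directed graph and $f\ge 0$ an integer, and assume Condition 1 holds for $G$. Let $A,B,F$ be a partition of $\mathcal V$ with $A,B$ both non-empty and $|F|\le f$. If it is not the case that $B \Rightarrow_{\mathcal V - F} A$, then there exist sets $A',B'$ such that: $A'$ and $B'$ are both non-empty; $A',B'$ form a partition of $A\cup B$; $A'\subseteq A$ and $B\subseteq B'$; and $B'\not\rightarrow A'$.
   Context: For disjoint sets $X,Y\subseteq\mathcal V$ with $Y$ non-empty, $X\rightarrow Y$ means that $X$ contains at least $f+1$ distinct nodes $i$ such that $(i,j)\in\mathcal E$ for some $j\in Y$; $X\not\rightarrow Y$ means this fails. Condition 1: for every partition $L,C,R,F$ of $\mathcal V$ (with $C$ or $F$ possibly empty) such that $L,R$ are non-empty and $|F|\le f$, either $L\cup C\rightarrow R$ or $R\cup C\rightarrow L$. An $(X,y)$-path is a directed path from some node of $X$ to the node $y\notin X$; it excludes $F$ if it contains no node of $F$; $(X,y)$-paths are disjoint if they pairwise share only $y$. For pairwise disjoint $X,Y,F$ with $|F|\le f$, $X \Rightarrow_{\mathcal V - F} Y$ means: $Y=\emptyset$, or every $y\in Y$ has at least $f+1$ pairwise disjoint $(X,y)$-paths excluding $F$. *)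

(* Defs.v *)
From mathcomp Require Import all_boot.
Set Implicit Arguments. Unset Strict Implicit. Unset Printing Implicit Defensive.

(* A finite simple directed graph: vertex set = finType T, edge relation e
   (e i j  <->  (i,j) is an edge), with no self-loops. *)
Definition simple_digraph (T : finType) (e : rel T) : Prop := irreflexive e.

Definition reaches (T : finType) (e : rel T) (f : nat) (X Y : {set T}) : Prop :=
  f.+1 <= #|[set i in X | [exists j in Y, e i j]]|.

Definition condition1 (T : finType) (e : rel T) (f : nat) : Prop :=
  forall L C R F : {set T},
    [disjoint L & C] -> [disjoint L & R] -> [disjoint L & F] ->
    [disjoint C & R] -> [disjoint C & F] -> [disjoint R & F] ->
    L :|: C :|: R :|: F = setT ->
    L != set0 -> R != set0 -> #|F| <= f ->
    reaches e f (L :|: C) R \/ reaches e f (R :|: C) L.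

Definition XY_path (T : finType) (e : rel T) (X : {set T}) (y : T) (p : seq T) : Prop :=
  y \notin X /\
  exists x s, [/\ p = x :: s, x \in X, path e x s, last x s = y & uniq p].

Definition excludes (T : finType) (F : {set T}) (p : seq T) : Prop :=
  all (fun v => v \notin F) p.

Definition disj_reach (T : finType) (e : rel T) (f : nat) (X Y F : {set T}) : Prop :=
  Y = set0 \/
  forall y, y \in Y ->
    exists ps : seq (seq T),
      [/\ size ps = f.+1,
          (forall p, p \in ps -> XY_path e X y p /\ excludes F p) &
          (forall i j, i < size ps -> j < size ps -> i != j ->
             forall v, v \in nth [::] ps i -> v \in nth [::] ps j -> v = y)].

(* Main.v *)
Require Import Defs.
From mathcomp Require Import all_boot zify.
From Stdlib Require Import Classical.
Set Implicit Arguments. Unset Strict Implicit. Unset Printing Implicit Defensive.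


Definition avoid (T : finType) (S : {set T}) (p : seq T) := all (fun v => v \notin S) p.
Definition walk (T : finType) (d : T) (e : rel T) (X Y : {set T}) (p : seq T) :=
  [&& p != [::], sorted e p, head d p \in X & last d p \in Y].
Definition spath (T : finType) (d : T) (e : rel T) (X Y : {set T}) (p : seq T) :=
  [/\ walk d e X Y p, uniq p, forall v, v \in p -> v \in X -> v = head d p
    & forall v, v \in p -> v \in Y -> v = last d p].
Definition fam (T : finType) (d : T) (e : rel T) (X Y : {set T}) k (ps : seq (seq T)) :=
  [/\ size ps = k, uniq ps, forall p, p \in ps -> spath d e X Y p
    & forall p q z, p \in ps -> q \in ps -> z \in p -> z \in q -> p = q].

Lemma sorted_cat_cons (T : Type) (e : rel T) a z c :
  sorted e (a ++ z :: c) = sorted e (rcons a z) && sorted e (z :: c).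
Proof. case: a => [|h a] //=; by rewrite cat_path rcons_path /= andbA. Qed.

Lemma head_cat_cons (T : Type) (d : T) a z c : head d (a ++ z :: c) = head z a.
Proof. by case: a. Qed.

Lemma last_cat_cons (T : Type) (d : T) a z c : last d (a ++ z :: c) = last z c.
Proof. by rewrite last_cat. Qed.

Lemma head_rcons (T : Type) (d : T) a z : head d (rcons a z) = head z a.
Proof. by rewrite -cats1 head_cat_cons. Qed.

Lemma uniq_head (T : eqType) (a c : seq T) z u :
  uniq (a ++ z :: c) -> u \in c -> u != head z a.
Proof.
rewrite cat_uniq => /and3P[_ H1 H2] uc; case: a H1 => [|h a] /= H1.
  by move: H2 => /= /andP[zc _]; apply/eqP => E; rewrite -E uc in zc.
apply/eqP => E; move: H1; rewrite -E /= => /norP[_ /hasPn /(_ u uc)].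
by rewrite inE eqxx.
Qed.

Lemma uniq_last (T : eqType) (a c : seq T) z u :
  uniq (a ++ z :: c) -> u \in a -> u != last z c.
Proof.
rewrite cat_uniq => /and3P[_ H1 _] ua; apply/eqP => E.
by move/hasPn: H1 => /(_ (last z c) (mem_last _ _)); rewrite -E ua.
Qed.

Lemma split_first (T : Type) (P : pred T) p : has P p ->
  exists a z c, [/\ p = a ++ z :: c, P z & ~~ has P a].
Proof.
elim: p => [|h p IH] //= /orP[Ph|Hp]; first by exists [::], h, p.
case: (boolP (P h)) => Ph; first by exists [::], h, p.
have [a [z [c [-> Pz Ha]]]] := IH Hp.
by exists (h :: a), z, c; rewrite /= (negbTE Ph).
Qed.

Lemma split_last (T : Type) (P : pred T) p : has P p ->
  exists a z c, [/\ p = a ++ z :: c, P z & ~~ has P c].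
Proof.
elim: p => [|h p IH] //= H.
case: (boolP (has P p)) => Hp.
  by have [a [z [c [-> Pz Hc]]]] := IH Hp; exists (h :: a), z, c.
by rewrite (negbTE Hp) orbF in H; exists [::], h, p.
Qed.

Lemma split_mem (T : eqType) (p : seq T) z : z \in p -> exists a c, p = a ++ z :: c.
Proof. by case/splitPr => a c; exists a, c. Qed.

Lemma head_mem (T : eqType) (d : T) p : p != [::] -> head d p \in p.
Proof. by case: p => //= h p _; rewrite mem_head. Qed.

Lemma last_mem (T : eqType) (d : T) p : p != [::] -> last d p \in p.
Proof. by case: p => //= h p _; rewrite mem_last. Qed.


Lemma avoidE (T : finType) (S : {set T}) p : avoid S p = ~~ has (fun v => v \in S) p.
Proof. by rewrite /avoid -all_predC. Qed.

Lemma avoid_sub (T : finType) (S : {set T}) p q :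
  avoid S p -> {subset q <= p} -> avoid S q.
Proof. move=> /allP H sub; apply/allP => v /sub; exact: H. Qed.

Lemma glue_sorted (T : eqType) (d : T) (e : rel T) p q :
  sorted e p -> sorted e q -> e (last d p) (head d q) -> p != [::] -> q != [::] ->
  sorted e (p ++ q).
Proof.
case: p => [|h p] // ; case: q => [|h' q] //= Hp Hq E _ _.
by rewrite cat_path Hp /= E.
Qed.

Lemma glue_sorted2 (T : eqType) (d : T) (e : rel T) p q :
  sorted e p -> sorted e q -> last d p = head d q -> p != [::] ->
  sorted e (p ++ behead q).
Proof.
case: p => [|h p] // ; case: q => [|h' q] /= Hp Hq E _; first by rewrite cats0.
by rewrite cat_path Hp /= E.
Qed.

Lemma head_catl (T : eqType) (d : T) p q : p != [::] -> head d (p ++ q) = head d p.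
Proof. by case: p. Qed.

Lemma menger_step (T : finType) (d : T) (e e' : rel T) (x y : T) (X Y S : {set T}) (k : nat) :
  (forall u v, e' u v = e u v && ((u, v) != (x, y))) ->
  e x y ->
  (forall S : {set T}, #|S| < k -> exists p, walk d e X Y p && avoid S p) ->
  #|S| < k ->
  (forall p, walk d e' X Y p -> avoid S p -> False) ->
  (forall k' X' Y', (forall S : {set T}, #|S| < k' -> exists p, walk d e' X' Y' p && avoid S p) ->
     exists ps, fam d e' X' Y' k' ps) ->
  exists ps, fam d e X Y k ps.
Proof.
move=> He' exy H hS NoW IH.
have e'e : forall u v, e' u v -> e u v by move=> u v; rewrite He' => /andP[].
have L1a : forall a z, sorted e (rcons a z) -> all (fun u => u != x) a -> sorted e' (rcons a z).
  move=> a z; case: a => [|h a] //=; elim: a h => [|h2 a IHa] h /=.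
    by rewrite He' => /andP[-> _] /andP[hx _]; rewrite xpair_eqE (negbTE hx).
  move=> /andP[eh2 Hp] /andP[hx Ha]; rewrite He' eh2 xpair_eqE (negbTE hx) /=.
  exact: IHa.
have L1b : forall z c, sorted e (z :: c) -> all (fun u => u != y) c -> sorted e' (z :: c).
  move=> z c; elim: c z => [|h c IHc] z //= /andP[ezh Hp] /andP[hy Hc].
  by rewrite He' ezh xpair_eqE (negbTE hy) andbF /=; apply: IHc.
have L1x : forall p, sorted e p -> x \notin p -> sorted e' p.
  move=> p; case/lastP: p => [|a z] // Hs Hx; apply: L1a => //.
  apply/allP => u ua; apply/eqP => ux; by rewrite -ux mem_rcons inE ua orbT in Hx.
have L1y : forall p, sorted e p -> y \notin p -> sorted e' p.
  move=> p; case: p => [|z c] // Hs Hy; apply: L1b => //.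
  apply/allP => u ua; apply/eqP => uy; by rewrite -uy inE ua orbT in Hy.
have NoSx : forall p, walk d e X Y p -> avoid (x |: S) p -> False.
  move=> p /and4P[np sp hp lp] ap; apply: (NoW p).
    rewrite /walk np hp lp !andbT /=; apply: L1x => //; apply/negP => xp.
    by move/allP: ap => /(_ x xp); rewrite setU11.
  by apply/allP => v vp; move/allP: ap => /(_ v vp); rewrite in_setU1 negb_or => /andP[].
have NoSy : forall p, walk d e X Y p -> avoid (y |: S) p -> False.
  move=> p /and4P[np sp hp lp] ap; apply: (NoW p).
    rewrite /walk np hp lp !andbT /=; apply: L1y => //; apply/negP => yp.
    by move/allP: ap => /(_ y yp); rewrite setU11.
  by apply/allP => v vp; move/allP: ap => /(_ v vp); rewrite in_setU1 negb_or => /andP[].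
have cSx0 : k <= #|x |: S|.
  rewrite leqNgt; apply/negP => /H [p /andP[wp ap]]; exact: (NoSx p).
have cSy0 : k <= #|y |: S|.
  rewrite leqNgt; apply/negP => /H [p /andP[wp ap]]; exact: (NoSy p).
have xS : x \notin S.
  by apply/negP => xS; move: cSx0; rewrite cardsU1 xS /= add0n leqNgt hS.
have yS : y \notin S.
  by apply/negP => yS; move: cSy0; rewrite cardsU1 yS /= add0n leqNgt hS.
have cSx : #|x |: S| = k by move: cSx0; rewrite cardsU1 xS /=; lia.
have cSy : #|y |: S| = k by move: cSy0; rewrite cardsU1 yS /=; lia.
set Sx := x |: S in NoSx cSx; set Sy := y |: S in NoSy cSy.
have [PF [sPF uPF spPF dPF]] : exists ps, fam d e' X Sx k ps.
  apply: IH => T0 hT; have [p /andP[wp ap]] := H T0 hT.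
  have hp : has (fun v => v \in Sx) p.
    by apply/negPn/negP => hn; apply: (NoSx p wp); rewrite avoidE.
  have [a [z [c [Ep zS ha]]]] := split_first hp.
  move: wp; rewrite /walk Ep sorted_cat_cons head_cat_cons => /and4P[_ /andP[s1 _] hX _].
  exists (rcons a z); apply/andP; split.
    rewrite /walk head_rcons last_rcons hX zS !andbT; apply/andP; split; first by case: a {ha Ep s1 hX}.
    apply: L1a => //; apply/allP => u ua; apply/eqP => ux.
    by move/hasPn: ha => /(_ u ua); rewrite ux setU11.
  apply: (avoid_sub ap) => v; rewrite Ep mem_rcons mem_cat !inE => /orP[->|->]; rewrite ?orbT //.
have [QF [sQF uQF spQF dQF]] : exists ps, fam d e' Sy Y k ps.
  apply: IH => T0 hT; have [p /andP[wp ap]] := H T0 hT.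
  have hp : has (fun v => v \in Sy) p.
    by apply/negPn/negP => hn; apply: (NoSy p wp); rewrite avoidE.
  have [a [z [c [Ep zS hc]]]] := split_last hp.
  move: wp; rewrite /walk Ep sorted_cat_cons last_cat_cons => /and4P[_ /andP[_ s2] _ lY].
  exists (z :: c); apply/andP; split.
    apply/and4P; split => //; apply: L1b => //; apply/allP => u uc; apply/eqP => uy.
    by move/hasPn: hc => /(_ u uc); rewrite uy setU11.
  apply: (avoid_sub ap) => v; rewrite Ep mem_cat => ->; by rewrite orbT.

have J : forall a z c, sorted e' (rcons a z) -> sorted e' (z :: c) -> head z a \in X ->
   last z c \in Y -> avoid S a -> avoid S c -> z \notin S -> False.
  move=> a z c s1 s2 hX lY aa ac zS; apply: (NoW (a ++ z :: c)).
    apply/and4P; split; [by case: a {s1 hX aa} | by rewrite sorted_cat_cons s1 s2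
      | by rewrite head_cat_cons | by rewrite last_cat_cons].
  by rewrite /avoid all_cat /= zS; rewrite /avoid in aa ac; rewrite aa ac.
have avP : forall P a z c, P \in PF -> P = a ++ z :: c -> avoid S a.
  move=> P a z c PP EP; have [_ uP _ lP] := spPF P PP; apply/allP => u ua; apply/negP => uS.
  have : u = last d P by apply: lP; [rewrite EP mem_cat ua | rewrite /Sx in_setU1 uS orbT].
  rewrite EP last_cat_cons => E; have U := uP; rewrite EP in U.
  by move: (uniq_last U ua); rewrite -E eqxx.
have avQ : forall Q a z c, Q \in QF -> Q = a ++ z :: c -> avoid S c.
  move=> Q a z c QQ EQ; have [_ uQ hQ _] := spQF Q QQ; apply/allP => u uc; apply/negP => uS.
  have : u = head d Q.
    by apply: hQ; [rewrite EQ mem_cat inE uc !orbT | rewrite /Sy in_setU1 uS orbT].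
  rewrite EQ head_cat_cons => E; have U := uQ; rewrite EQ in U.
  by move: (uniq_head U uc); rewrite -E eqxx.
have L5 : forall P Q z, P \in PF -> Q \in QF -> z \in P -> z \in Q ->
    [/\ z \in S, z = last d P & z = head d Q].
  move=> P Q z PP QQ zP zQ.
  have [/and4P[_ sP hP _] uP _ lP] := spPF P PP.
  have [/and4P[_ sQ _ lQ] uQ hQ _] := spQF Q QQ.
  have zS : z \in S.
    apply/negPn/negP => zS.
    have [a [a' EP]] := split_mem zP; have [c' [c EQ]] := split_mem zQ.
    apply: (J a z c).
    - by move: sP; rewrite EP sorted_cat_cons => /andP[].
    - by move: sQ; rewrite EQ sorted_cat_cons => /andP[].
    - by move: hP; rewrite EP head_cat_cons.
    - by move: lQ; rewrite EQ last_cat_cons.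
    - exact: avP PP EP.
    - exact: avQ QQ EQ.
    - exact: zS.
  split => //; [apply: lP | apply: hQ] => //; by rewrite ?/Sx ?/Sy in_setU1 zS orbT.
have PrefY : forall P z, P \in PF -> z \in P -> z \in Y -> z \notin S -> False.
  move=> P z PP zP zY zS; have [/and4P[_ sP hP _] _ _ _] := spPF P PP.
  have [a [a' EP]] := split_mem zP.
  have s1 : sorted e' (rcons a z) by move: sP; rewrite EP sorted_cat_cons => /andP[].
  have h1 : head z a \in X by move: hP; rewrite EP head_cat_cons.
  exact: (J a z [::] s1 (erefl _) h1 zY (avP _ _ _ _ PP EP) (erefl _) zS).
have SuffX : forall Q z, Q \in QF -> z \in Q -> z \in X -> z \notin S -> False.
  move=> Q z QQ zQ zX zS; have [/and4P[_ sQ _ lQ] _ _ _] := spQF Q QQ.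
  have [c' [c EQ]] := split_mem zQ.
  have s2 : sorted e' (z :: c) by move: sQ; rewrite EQ sorted_cat_cons => /andP[].
  have l2 : last z c \in Y by move: lQ; rewrite EQ last_cat_cons.
  exact: (J [::] z c (erefl _) s2 zX l2 (erefl _) (avQ _ _ _ _ QQ EQ) zS).
have LPu : uniq (map (last d) PF).
  rewrite map_inj_in_uniq // => P1 P2 P1in P2in E.
  have [/and4P[n1 _ _ _] _ _ _] := spPF P1 P1in.
  have [/and4P[n2 _ _ _] _ _ _] := spPF P2 P2in.
  apply: (dPF P1 P2 (last d P1)) => //; [exact: last_mem | rewrite E; exact: last_mem].
have LPS : forall v, v \in Sx -> v \in map (last d) PF.
  have sub : map (last d) PF \subset Sx.
    apply/subsetP => v /mapP[P PP ->]; by have [/and4P[_ _ _ l] _ _ _] := spPF P PP.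
  have ceq : #|map (last d) PF| = #|Sx|.
    by move/card_uniqP: LPu => ->; rewrite size_map sPF cSx.
  by move/(subset_cardP ceq): sub => EQ v vS; rewrite EQ.
have HQu : uniq (map (head d) QF).
  rewrite map_inj_in_uniq // => P1 P2 P1in P2in E.
  have [/and4P[n1 _ _ _] _ _ _] := spQF P1 P1in.
  have [/and4P[n2 _ _ _] _ _ _] := spQF P2 P2in.
  apply: (dQF P1 P2 (head d P1)) => //; [exact: head_mem | rewrite E; exact: head_mem].
have HQS : forall v, v \in Sy -> v \in map (head d) QF.
  have sub : map (head d) QF \subset Sy.
    apply/subsetP => v /mapP[P PP ->]; by have [/and4P[_ _ l _] _ _ _] := spQF P PP.
  have ceq : #|map (head d) QF| = #|Sy|.
    by move/card_uniqP: HQu => ->; rewrite size_map sQF cSy.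
  by move/(subset_cardP ceq): sub => EQ v vS; rewrite EQ.
pose Pv v := nth [::] PF (index v (map (last d) PF)).
pose Qv v := nth [::] QF (index v (map (head d) QF)).
have PvP : forall v, v \in Sx -> Pv v \in PF /\ last d (Pv v) = v.
  move=> v vS; have vin := LPS v vS; split.
    by apply: mem_nth; rewrite -(size_map (last d)) index_mem.
  by rewrite /Pv -(nth_map [::] d) ?nth_index // -(size_map (last d)) index_mem.
have QvP : forall v, v \in Sy -> Qv v \in QF /\ head d (Qv v) = v.
  move=> v vS; have vin := HQS v vS; split.
    by apply: mem_nth; rewrite -(size_map (head d)) index_mem.
  by rewrite /Qv -(nth_map [::] d) ?nth_index // -(size_map (head d)) index_mem.
pose lab v := if v == x then y else v.
have labS : forall v, v \in Sx -> lab v \in Sy.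
  move=> v; rewrite /lab /Sx /Sy !in_setU1; case: (v == x) => /=; first by rewrite eqxx.
  by move=> ->; rewrite orbT.
have lab_inj : forall v w, v \in Sx -> w \in Sx -> lab v = lab w -> v = w.
  move=> v w; rewrite /lab /Sx !in_setU1.
  case: eqP => [->|vx]; case: eqP => [->|wx] //=.
  - by move=> _ wS E; move: yS; rewrite E wS.
  - by move=> vS _ E; move: yS; rewrite -E vS.
pose Gl v := Pv v ++ (if v == x then Qv y else behead (Qv v)).
have GQ : forall v z, z \in Gl v -> z \in Pv v \/ z \in Qv (lab v).
  move=> v z; rewrite /Gl /lab mem_cat; case: ifP => _ /orP[]; auto.
  by move/mem_behead; auto.
have D : forall v w z, v \in Sx -> w \in Sx -> z \in Gl v -> z \in Gl w -> v = w.
  move=> v w z vS wS zv zw.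
  have [Pvin lPv] := PvP v vS; have [Pwin lPw] := PvP w wS.
  have [Qvin hQv] := QvP _ (labS v vS); have [Qwin hQw] := QvP _ (labS w wS).
  case/GQ: zv => [zPv|zQv]; case/GQ: zw => [zPw|zQw].
  - by rewrite -lPv (dPF _ _ _ Pvin Pwin zPv zPw) lPw.
  - have [zS E1 E2] := L5 _ _ _ Pvin Qwin zPv zQw.
    rewrite lPv in E1; rewrite hQw /lab in E2; move: E2; case: ifP => _ E2.
      by move: yS; rewrite -E2 zS.
    by rewrite -E1 E2.
  - have [zS E1 E2] := L5 _ _ _ Pwin Qvin zPw zQv.
    rewrite lPw in E1; rewrite hQv /lab in E2; move: E2; case: ifP => _ E2.
      by move: yS; rewrite -E2 zS.
    by rewrite -E1 E2.
  - apply: lab_inj => //; by rewrite -hQv (dQF _ _ _ Qvin Qwin zQv zQw) hQw.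
have GL : forall P Q R, P \in PF -> Q \in QF -> sorted e (P ++ R) -> {subset R <= Q} -> uniq R ->
   (forall z, z \in P -> z \in R -> False) -> last d (P ++ R) = last d Q ->
   (forall z, z \in Q -> z \in S -> z \in P) -> (forall z, z \in P -> z \in S -> z \in Q) ->
   spath d e X Y (P ++ R).
  move=> P Q R PP QQ sG RQ uR dPR lG C1 C2.
  have [/and4P[nP _ hPX _] uP hP _] := spPF P PP.
  have [/and4P[nQ _ _ lQY] _ _ lQ] := spQF Q QQ.
  split.
  - apply/and4P; split => //; last by rewrite lG.
      by move: nP; rewrite -!nilpE cat_nilp => /negbTE ->.
    by rewrite head_catl.
  - rewrite cat_uniq uP uR andbT /=; apply/hasPn => z zR; apply/negP => zP; exact: dPR z zP zR.
  - move=> z; rewrite mem_cat head_catl // => /orP[zP zX | zR zX]; first exact: hP.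
    exfalso; case: (boolP (z \in S)) => zS.
      by apply: (dPR z) => //; apply: C1 => //; apply: RQ.
    exact: SuffX Q z QQ (RQ z zR) zX zS.
  - move=> z; rewrite mem_cat lG => /orP[zP zY | zR zY]; last by apply: lQ => //; apply: RQ.
    case: (boolP (z \in Q)) => zQ; first exact: lQ.
    exfalso; case: (boolP (z \in S)) => zS; first by move: zQ; rewrite C2.
    exact: PrefY P z PP zP zY zS.
have SP : forall v, v \in Sx -> spath d e X Y (Gl v).
  move=> v vS; have [Pin lPv] := PvP v vS.
  have [/and4P[nP sP _ _] _ _ lSP] := spPF _ Pin.
  rewrite /Gl; case: ifP => vx.
  - move/eqP: vx => vx; subst v.
    have [Qin hQy] := QvP y (setU11 _ _).
    have [/and4P[nQ sQ _ _] uQ hSQ _] := spQF _ Qin.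
    apply: (GL _ _ _ Pin Qin) => //.
    + apply: (@glue_sorted _ d) => //; try exact: (sub_sorted e'e sP); try exact: (sub_sorted e'e sQ).
      by rewrite lPv hQy.
    + move=> z zP zQ; have [zS E1 _] := L5 _ _ _ Pin Qin zP zQ.
      by move: xS; rewrite -lPv -E1 zS.
    + by rewrite last_cat; case: (Qv y) nQ.
    + move=> z zQ zS; have E : z = head d (Qv y) by apply: hSQ => //; rewrite /Sy in_setU1 zS orbT.
      by move: yS; rewrite -hQy -E zS.
    + move=> z zP zS; have E : z = last d (Pv x) by apply: lSP => //; rewrite /Sx in_setU1 zS orbT.
      by move: xS; rewrite -lPv -E zS.
  - have vS' : v \in S by move: vS; rewrite /Sx in_setU1 vx.
    have [Qin hQv] : Qv v \in QF /\ head d (Qv v) = v by apply: QvP; rewrite /Sy in_setU1 vS' orbT.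
    have [/and4P[nQ sQ _ _] uQ hSQ _] := spQF _ Qin.
    apply: (GL _ _ _ Pin Qin) => //.
    + apply: (@glue_sorted2 _ d) => //; try exact: (sub_sorted e'e sP); try exact: (sub_sorted e'e sQ).
      by rewrite lPv hQv.
    + exact: mem_behead.
    + by move: uQ; case: (Qv v) => //= h t /andP[].
    + move=> z zP zQ; have [_ _ E] := L5 _ _ _ Pin Qin zP (mem_behead zQ).
      move: uQ zQ E; case: (Qv v) => //= h t /andP[ht _] zt E.
      by move: ht; rewrite -E zt.
    + rewrite last_cat lPv; move: hQv; case: (Qv v) => [/= ->|h t /= ->] //.
    + move=> z zQ zS; have E : z = head d (Qv v) by apply: hSQ => //; rewrite /Sy in_setU1 zS orbT.
      by rewrite E hQv; have := @last_mem _ d _ nP; rewrite lPv.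
    + move=> z zP zS; have E : z = last d (Pv v) by apply: lSP => //; rewrite /Sx in_setU1 zS orbT.
      by rewrite E lPv; have := @head_mem _ d _ nQ; rewrite hQv.
exists (map Gl (enum Sx)); split.
- by rewrite size_map -cardE cSx.
- rewrite map_inj_in_uniq ?enum_uniq // => v w; rewrite !mem_enum => vS wS E.
  have [Pin lPv] := PvP v vS; have [/and4P[nP _ _ _] _ _ _] := spPF _ Pin.
  have vG : v \in Gl v by rewrite /Gl mem_cat; have := @last_mem _ d _ nP; rewrite lPv => ->.
  by apply: (D v w v vS wS vG); rewrite -E.
- by move=> p /mapP[v]; rewrite mem_enum => vS ->; apply: SP.
- move=> p q z /mapP[v]; rewrite mem_enum => vS -> /mapP[w]; rewrite mem_enum => wS -> zv zw.
  by rewrite (D v w z).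
Qed.


Lemma menger_base (T : finType) (d : T) (e : rel T) k (X Y : {set T}) :
  (forall u v, ~~ e u v) ->
  (forall S : {set T}, #|S| < k -> exists p, walk d e X Y p && avoid S p) ->
  exists ps, fam d e X Y k ps.
Proof.
move=> ne H.
have ck : k <= #|X :&: Y|.
  rewrite leqNgt; apply/negP => /H [p /andP[/and4P[np sp hp lp] ap]].
  case: p np sp hp lp ap => [|h [|h' t]] //= _.
    by move=> _ hX hY; rewrite inE hX hY.
  by rewrite (negbTE (ne h h')).
exists (map (fun v => [:: v]) (take k (enum (X :&: Y)))); split.
- by rewrite size_map size_takel // -cardE.
- rewrite map_inj_uniq; first by apply: take_uniq; apply: enum_uniq.
  by move=> v w [].
- move=> p /mapP[v /mem_take]; rewrite mem_enum inE => /andP[vX vY] ->.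
  split => //; first by rewrite /walk /= vX vY.
  + by move=> u; rewrite inE => /eqP ->.
  + by move=> u; rewrite inE => /eqP ->.
- move=> p q z /mapP[v _ ->] /mapP[w _ ->]; rewrite !inE => /eqP -> /eqP ->.
  done.
Qed.

Lemma fam_sub (T : finType) (d : T) (e e' : rel T) k (X Y : {set T}) ps :
  subrel e' e -> fam d e' X Y k ps -> fam d e X Y k ps.
Proof.
move=> sub [s u sp dj]; split => // p pin.
have [/and4P[n so h l] up hp lp] := sp p pin; split => //.
by rewrite /walk n h l (sub_sorted sub so).
Qed.

Lemma menger (T : finType) (d : T) n : forall (e : rel T), #|[set p : T * T | e p.1 p.2]| <= n ->
  forall k (X Y : {set T}), (forall S : {set T}, #|S| < k -> exists p, walk d e X Y p && avoid S p) ->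
  exists ps, fam d e X Y k ps.
Proof.
elim: n => [|n IH] e ce k X Y H.
  apply: menger_base H => u v; apply/negP => euv.
  have : 0 < #|[set p : T * T | e p.1 p.2]| by apply/card_gt0P; exists (u, v); rewrite inE.
  by rewrite ltnNge ce.
case: (pickP (fun p : T * T => e p.1 p.2)) => [[x y] /= exy | none]; last first.
  by apply: menger_base H => u v; rewrite (none (u, v)).
pose e' := fun u v => e u v && ((u, v) != (x, y)).
have ce' : #|[set p : T * T | e' p.1 p.2]| <= n.
  have : [set p : T * T | e' p.1 p.2] \proper [set p : T * T | e p.1 p.2].
    apply/properP; split.
      by apply/subsetP => p; rewrite !inE /e' => /andP[].
    by exists (x, y); rewrite !inE /e' ?exy ?eqxx.
  by move/proper_card => h; move: ce; lia.
case: (classic (forall S : {set T}, #|S| < k -> exists p, walk d e' X Y p && avoid S p)) => H'.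
  have [ps F] := IH e' ce' k X Y H'.
  by exists ps; apply: (fam_sub _ F) => u v /andP[].
have [S HS] := not_all_ex_not _ _ H'.
have [hS NoW] := imply_to_and _ _ HS.
apply: (menger_step (e' := e') (x := x) (y := y) (S := S)) => //.
  move=> p wp ap; apply: NoW; exists p; by rewrite wp ap.
by move=> k' X' Y' H2; apply: IH.
Qed.


Lemma path_all (T : Type) (r : rel T) (P : pred T) b p :
  path r b p -> P b -> (forall u v, r u v -> P v) -> all P (b :: p).
Proof.
elim: p b => [|h p IH] b /=; first by move=> _ ->.
move=> /andP[rbh Hp] Pb HP; rewrite Pb /=; apply: IH => //; exact: HP rbh.
Qed.

Theorem lemma6 (T : finType) (e : rel T) (f : nat) (A B F : {set T}) :
  simple_digraph e ->
  condition1 e f ->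
  [disjoint A & B] -> [disjoint A & F] -> [disjoint B & F] ->
  A :|: B :|: F = setT ->
  A != set0 -> B != set0 -> #|F| <= f ->
  ~ disj_reach e f B A F ->
  exists A' B' : {set T},
    [/\ A' != set0 /\ B' != set0,
        [disjoint A' & B'] /\ A' :|: B' = A :|: B,
        A' \subset A, B \subset B' &
        ~ reaches e f B' A'].
Proof.
move=> _ _ dAB dAF dBF _ A0 B0 cF ndr.
have ndr2 := fun h => ndr (or_intror h).
have [a Ha] := not_all_ex_not _ _ ndr2.
have [aA nfam] := imply_to_and _ _ Ha.
apply: NNPP => Hno.
pose W := (A :|: B) :\ a.
pose eW := fun u v => e u v && (u \in W) && (v \in W).
pose Y := [set u in W | e u a].
have aB : a \notin B by rewrite (disjointFr dAB aA).
have BW : forall b, b \in B -> b \in W.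
  by move=> b bB; rewrite !inE bB orbT andbT; apply/eqP => E; rewrite -E bB in aB.
have WAB : forall v, v \in W -> v \in A :|: B by move=> v; rewrite inE => /andP[].
have [ps [sps ups spps dps]] : exists ps, fam a eW B Y f.+1 ps.
  apply: (menger (leqnn _)) => S hS; apply: NNPP => nw.
  pose r := fun u v => eW u v && (u \notin S) && (v \notin S).
  pose R := [set v | [exists b in B :\: S, connect r b v]].
  have Rall : forall b p, b \in B -> b \notin S -> path r b p ->
       all (fun v => (v \in W) && (v \notin S)) (b :: p).
    move=> b p bB bS pp; apply: path_all pp _ _; first by rewrite BW.
    by move=> u v /andP[/andP[/andP[_ ->]]] _ ->.
  have RP : forall v, v \in R -> [/\ v \in W, v \notin S &
       exists b p, [/\ b \in B, b \notin S, path r b p & v = last b p]].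
    move=> v; rewrite inE => /existsP[b /andP[]]; rewrite inE => /andP[bS bB] /connectP[p pp E].
    have /allP := Rall b p bB bS pp => /(_ v); rewrite E mem_last => /(_ isT) /andP[vW vS].
    by split => //; exists b, p.
  pose S0 := S :&: W.
  pose B' := S0 :|: R.
  pose A' := (A :|: B) :\: B'.
  have B'sub : forall v, v \in B' -> v \in A :|: B.
    move=> v; rewrite inE => /orP[|/RP[vW _ _]]; last exact: WAB.
    by rewrite inE => /andP[_ /WAB].
  have BB' : forall b, b \in B -> b \in B'.
    move=> b bB; rewrite in_setU; case: (boolP (b \in S)) => bS /=.
      by rewrite in_setI bS BW.
    apply/orP; right; rewrite inE; apply/existsP; exists b; by rewrite !inE bS bB connect0.
  have aA' : a \in A'.
    rewrite !inE aA /= andbT; apply/negP => /orP[|].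
      by rewrite eqxx /= andbF.
    move=> aR; have aR' : a \in R by rewrite inE.
    by have [aW _ _] := RP a aR'; move: aW; rewrite /W !inE eqxx.
  apply: Hno; exists A', B'; split.
  - split; apply/set0Pn; [by exists a | by have /set0Pn [b bB] := B0; exists b; apply: BB'].
  - split.
      by rewrite disjoint_subset; apply/subsetP => v; rewrite in_setD => /andP[].
    apply/setP => v; rewrite in_setU in_setD; case: (boolP (v \in B')) => vB' /=.
      by rewrite B'sub.
    by rewrite orbF.
  - apply/subsetP => v; rewrite in_setD in_setU => /andP[vB' /orP[//|vB]].
    by rewrite BB' in vB'.
  - by apply/subsetP => b; apply: BB'.
  - rewrite /reaches => hr.
    have : ~~ ([set i in B' | [exists j in A', e i j]] \subset S0).
      apply/negP => sub; move: (subset_leq_card sub) hr.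
      have : #|S0| <= #|S| by apply: subset_leq_card; apply: subsetIl.
      lia.
    case/subsetPn => i; rewrite inE => /andP[iB' /existsP[j /andP[jA' eij]]] iS0.
    have iR : i \in R by move: iB'; rewrite inE (negbTE iS0).
    have [iW iS [b [p [bB bS pp Ei]]]] := RP i iR.
    case: (eqVneq j a) => [ja|jna].
      apply: nw; exists (b :: p); apply/andP; split.
        rewrite ja in eij; rewrite /walk /= bB -Ei inE iW eij /= andbT.
        by apply: sub_path pp => u v /andP[/andP[->]].
      by have := Rall b p bB bS pp; apply: sub_all => v /andP[].
    have jW : j \in W.
      by rewrite /W in_setD1 jna /=; move: jA'; rewrite in_setD => /andP[_ ->].
    have jS : j \notin S.
      by apply/negP => jS; move: jA'; rewrite in_setD /B' in_setU /S0 in_setI jS jW.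
    have jR : j \in R.
      rewrite inE; apply/existsP; exists b; rewrite !inE bS bB /=.
      apply: (connect_trans (y := i)); first by apply/connectP; exists p.
      by apply: connect1; rewrite /r /eW eij iW jW iS jS.
    by move: jA'; rewrite in_setD /B' in_setU jR orbT.
apply: nfam; exists (map (fun p => rcons p a) ps); split.
- by rewrite size_map.
- move=> p' /mapP[p pin ->].
  have [/and4P[np sp hp lp] up _ _] := spps p pin.
  case: p np sp hp lp up pin => [|h t] // _ sp hp lp up pin.
  have allW : all (fun v => v \in W) (h :: t).
    apply: path_all sp _ _; first exact: BW.
    by move=> u v /andP[_ ->].
  split.
    split => //; exists h, (rcons t a); split => //.
    + rewrite rcons_path; apply/andP; split.
        by apply: sub_path sp => u v /andP[/andP[]].
      by move: lp; rewrite inE => /andP[].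
    + by rewrite last_rcons.
    + rewrite rcons_uniq up andbT; apply/negP => /(allP allW).
      by rewrite !inE eqxx.
  rewrite /excludes all_rcons; apply/andP; split; first by rewrite (disjointFr dAF aA).
  apply/allP => v /(allP allW) /WAB; rewrite inE => /orP[vA|vB].
    by rewrite (disjointFr dAF vA).
  by rewrite (disjointFr dBF vB).
- move=> i j; rewrite size_map => ilt jlt ij v.
  rewrite (nth_map [::]) // (nth_map [::]) // !mem_rcons !inE.
  case: eqP => // _ /= vi vj; exfalso.
  have := dps _ _ _ (mem_nth [::] ilt) (mem_nth [::] jlt) vi vj.
  by move/eqP; rewrite nth_uniq // (negbTE ij).
Qed.
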